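(* If $\mathcal{P}$ and $\mathcal{Q}$ are ranked finite posets each having a minimum and a maximum element, then $\mathcal{J}(\mathcal{P}\times\mathcal{Q},t)=\mathcal{J}(\mathcal{P},t)\,\mathcal{J}(\mathcal{Q},t)$.
   Context: $\mathcal{P}\times\mathcal{Q}$ carries the product order $(x_1,x_2)\le(y_1,y_2)$ iff $x_1\le y_1$ and $x_2\le y_2$, with rank $\mathrm{rk}(x_1,x_2)=\mathrm{rk}(x_1)+\mathrm{rk}(x_2)$. For a ranked finite poset $\mathcal{R}$ with minimum $\hat 0$ and maximum $\hat 1$, $\mathrm{rk}(\mathcal{R})=\mathrm{rk}(\hat 1)$; let $\delta_3(x,y,z)=1$ if $x=y=z$ and $0$ otherwise, let $J=J_\mathcal{R}$ be the unique integer-valued function on triples $x\le y\le z$ with $\sum_{x\le a\le y\le b\le z}J(a,y,b)=\delta_3(x,y,z)$ for all $x\le y\le z$, and $\mathcal{J}(\mathcal{R},t)=(-1)^{\mathrm{rk}(\mathcal{R})}\sum_{x\in\mathcal{R}}J(\hat 0,x,\hat 1)\,t^{\mathrm{rk}(\mathcal{R})-\mathrm{rk}(x)}$. *)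

(* Defs.v *)
From mathcomp Require Import all_boot all_order all_algebra.
Set Implicit Arguments. Unset Strict Implicit. Unset Printing Implicit Defensive.
Import Order.Theory GRing.Theory.

(* Finite posets with a minimum (\bot) and maximum (\top) are modelled by
   MathComp's finTBPOrderType; the product poset with the product order is
   MathComp's T1 *p T2 (order: componentwise). *)

Section Defs.
Variables (disp : Order.disp_t) (T : finTBPOrderType disp).

Definition covers (x y : T) : bool :=
  ((x < y)%O && [forall z : T, ~~ ((x < z)%O && (z < y)%O)]).

Definition rank_function (rk : T -> nat) : Prop :=
  rk \bot%O = 0%N /\ forall x y : T, covers x y -> rk y = (rk x).+1.

Definition delta3 (x y z : T) : int := ((x == y) && (y == z))%:R.

Definition is_J (J : T -> T -> T -> int) : Prop :=
  forall x y z : T, (x <= y)%O -> (y <= z)%O ->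
    (\sum_(a : T | (x <= a)%O && (a <= y)%O)
       \sum_(b : T | (y <= b)%O && (b <= z)%O) J a y b)%R = delta3 x y z.

Definition calJ (rk : T -> nat) (J : T -> T -> T -> int) : {poly int} :=
  ((-1) ^+ (rk \top%O) *
   \sum_(x : T) J \bot%O x \top%O *: 'X^(rk \top%O - rk x))%R.

End Defs.

Definition prod_rank (d1 d2 : Order.disp_t) (P : finTBPOrderType d1)
  (Q : finTBPOrderType d2) (rkP : P -> nat) (rkQ : Q -> nat) : P *p Q -> nat :=
  fun x => (rkP x.1 + rkQ x.2)%N.

(* Main.v *)
Require Import Defs.
From mathcomp Require Import all_boot all_order all_algebra.
Import Order.Theory GRing.Theory.
Set Implicit Arguments. Unset Strict Implicit. Unset Printing Implicit Defensive.
Local Open Scope order_scope.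

Lemma card_up_lt d (T : finPOrderType d) (a a' : T) :
  a < a' -> (#|[set w | (a' <= w)%O]| < #|[set w | (a <= w)%O]|)%N.
Proof.
move=> lt; apply: proper_card; apply/properP; split.
  by apply/subsetP => w; rewrite !inE => h; exact: le_trans (ltW lt) h.
by exists a; rewrite !inE ?lexx // lt_geF.
Qed.

Lemma card_down_lt d (T : finPOrderType d) (a a' : T) :
  a' < a -> (#|[set w | (w <= a')%O]| < #|[set w | (w <= a)%O]|)%N.
Proof.
move=> lt; apply: proper_card; apply/properP; split.
  by apply/subsetP => w; rewrite !inE => h; exact: le_trans h (ltW lt).
by exists a; rewrite !inE ?lexx // lt_geF.
Qed.

Lemma exists_cover d (T : finTBPOrderType d) (x y : T) :
  x < y -> exists z, covers x z && (z <= y).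
Proof.
have [n hn] : exists n, (#|[set w | (w <= y)%O]| < n)%N by exists (#|[set w | (w <= y)%O]|).+1.
elim: n y hn => [|n IH] y; first by rewrite ltn0.
move=> hn xy.
case C: (covers x y); first by exists y; rewrite C lexx.
move: C; rewrite /covers xy /= => /negbT /forallPn [w]; rewrite negbK => /andP [xw wy].
have [z /andP [cz zw]] : exists z, covers x z && (z <= w).
  apply: IH xw; have := card_down_lt wy; move: hn; rewrite ltnS => h1 h2; exact: leq_trans h2 h1.
by exists z; apply/andP; split=> //; exact: le_trans zw (ltW wy).
Qed.

Lemma rank_mono d (T : finTBPOrderType d) (rk : T -> nat) :
  rank_function rk -> forall x y : T, x <= y -> (rk x <= rk y)%N.
Proof.
move=> [_ Hc] x y.
have [n hn] : exists n, (#|[set w | (x <= w)%O]| < n)%N by exists (#|[set w | (x <= w)%O]|).+1.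
elim: n x hn => [|n IH] x; first by rewrite ltn0.
move=> hn.
rewrite le_eqVlt => /orP [/eqP -> // | xy].
have [z /andP [cz zy]] := exists_cover xy.
have := Hc _ _ cz => rz.
have : (rk z <= rk y)%N.
  apply: IH zy; move/andP: cz => [xz _]; have := card_up_lt xz; move: hn; rewrite ltnS => h1 h2; exact: leq_trans h2 h1.
by rewrite rz => /ltnW.
Qed.


Lemma J_uniq d (T : finTBPOrderType d) (J1 J2 : T -> T -> T -> int) :
  is_J J1 -> is_J J2 -> forall a y b : T, a <= y -> y <= b -> J1 a y b = J2 a y b.
Proof.
move=> H1 H2 a y b.
pose m (a b : T) := (#|[set w | (a <= w)%O]| + #|[set w | (w <= b)%O]|)%N.
have [n hn] : exists n, (m a b < n)%N by exists (m a b).+1.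
elim: n a b hn => [|n IH] a b; first by rewrite ltn0.
move=> hn ay yb.
pose D a' b' := (J1 a' y b' - J2 a' y b')%R.
have E : (\sum_(a' : T | (a <= a')%O && (a' <= y)%O)
           \sum_(b' : T | (y <= b')%O && (b' <= b)%O) D a' b')%R = 0%R.
  rewrite (eq_bigr (fun a' => \sum_(b' : T | (y <= b')%O && (b' <= b)%O) J1 a' y b' -
      \sum_(b' : T | (y <= b')%O && (b' <= b)%O) J2 a' y b'))%R; last by move=> *; rewrite sumrB.
  by rewrite sumrB H1 // H2 // subrr.
rewrite (bigD1 a) /= ?lexx ?ay // in E.
rewrite (bigD1 b) /= ?lexx ?yb // in E.
have Z1 : (\sum_(b' : T | ((y <= b')%O && (b' <= b)%O) && (b' != b)) D a b')%R = 0%R.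
  apply: big1 => b' /andP [/andP [yb' b'b] nb].
  rewrite /D IH ?subrr //.
  idtac.
  have lt : b' < b by rewrite lt_neqAle nb b'b.
  have h2 := card_down_lt lt; have h1 : (m a b <= n)%N by rewrite -ltnS.
  have h3 : (m a b' < m a b)%N by rewrite /m ltn_add2l.
  exact: leq_trans h3 h1.
have Z2 : (\sum_(a' : T | ((a <= a')%O && (a' <= y)%O) && (a' != a))
           \sum_(b' : T | (y <= b')%O && (b' <= b)%O) D a' b')%R = 0%R.
  apply: big1 => a' /andP [/andP [aa' a'y] na].
  apply: big1 => b' /andP [yb' b'b].
  rewrite /D IH ?subrr //.
  idtac.
  have lt : a < a' by rewrite lt_neqAle eq_sym na aa'.
  have h2 := card_up_lt lt; have h1 : (m a b <= n)%N by rewrite -ltnS.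
  have h4 : (#|[set w | (w <= b')%O]| <= #|[set w | (w <= b)%O]|)%N.
    apply: subset_leq_card; apply/subsetP => w; rewrite !inE => h.
    exact: le_trans h b'b.
  have h3 : (m a' b' < m a b)%N by rewrite /m; exact: leq_add h2 h4.
  exact: leq_trans h3 h1.
by rewrite Z1 Z2 !addr0 /D in E; apply/eqP; rewrite -subr_eq0 E.
Qed.

Lemma sum_prod4 d1 d2 (P : finTBPOrderType d1) (Q : finTBPOrderType d2)
  (A1 B1 : pred P) (A2 B2 : pred Q) (f : P -> P -> int) (g : Q -> Q -> int) :
  (\sum_(a : P *p Q | A1 a.1 && A2 a.2) \sum_(b : P *p Q | B1 b.1 && B2 b.2)
     f a.1 b.1 * g a.2 b.2 =
  (\sum_(a1 | A1 a1) \sum_(b1 | B1 b1) f a1 b1) *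
  (\sum_(a2 | A2 a2) \sum_(b2 | B2 b2) g a2 b2))%R.
Proof.
rewrite -(pair_big A1 A2 (fun a1 a2 => \sum_(b : P *p Q | B1 b.1 && B2 b.2) f a1 b.1 * g a2 b.2)%R).
rewrite big_distrl /=; apply: eq_bigr => a1 _.
rewrite big_distrr /=; apply: eq_bigr => a2 _.
rewrite -(pair_big B1 B2 (fun b1 b2 => f a1 b1 * g a2 b2)%R) /=.
rewrite big_distrl /=; apply: eq_bigr => b1 _.
by rewrite big_distrr.
Qed.

Lemma is_J_prod d1 d2 (P : finTBPOrderType d1) (Q : finTBPOrderType d2)
  (JP : P -> P -> P -> int) (JQ : Q -> Q -> Q -> int) :
  is_J JP -> is_J JQ ->
  is_J (fun a y b : P *p Q => (JP a.1 y.1 b.1 * JQ a.2 y.2 b.2)%R).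
Proof.
move=> HP HQ [x1 x2] [y1 y2] [z1 z2].
rewrite !leEprod /= => /andP [xy1 xy2] /andP [yz1 yz2].
have -> : delta3 ((x1, x2) : P *p Q) (y1, y2) (z1, z2) =
   (delta3 x1 y1 z1 * delta3 x2 y2 z2)%R.
  rewrite /delta3 !xpair_eqE.
  by case: (x1 == y1); case: (x2 == y2); case: (y1 == z1); case: (y2 == z2).
rewrite -HP // -HQ // -sum_prod4.
rewrite (eq_bigl (fun a : P *p Q => ((x1 <= a.1 <= y1) && (x2 <= a.2 <= y2))%O)); last first.
  by move=> [a1 a2]; rewrite !leEprod /= andbACA.
apply: eq_bigr => a _.
apply: eq_bigl => -[b1 b2]; rewrite !leEprod /= andbACA //.
Qed.
From mathcomp Require Import zify.
Local Open Scope ring_scope.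

Theorem proposition6p5 (d1 d2 : Order.disp_t)
  (P : finTBPOrderType d1) (Q : finTBPOrderType d2)
  (rkP : P -> nat) (rkQ : Q -> nat)
  (JP : P -> P -> P -> int) (JQ : Q -> Q -> Q -> int)
  (JPQ : P *p Q -> P *p Q -> P *p Q -> int) :
  rank_function rkP -> rank_function rkQ ->
  is_J JP -> is_J JQ -> is_J JPQ ->
  calJ (prod_rank rkP rkQ) JPQ = (calJ rkP JP * calJ rkQ JQ)%R.
Proof.
move=> RP RQ HP HQ HPQ.
have HK := is_J_prod HP HQ.
rewrite /calJ /prod_rank /=.
rewrite (eq_bigr (fun x : P *p Q => (JP \bot%O x.1 \top%O *: 'X^(rkP \top%O - rkP x.1)) *
   (JQ \bot%O x.2 \top%O *: 'X^(rkQ \top%O - rkQ x.2)))%R); last first.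
  move=> [x1 x2] _.
  rewrite (J_uniq HPQ HK) ?le0x ?lex1 //= -scalerAl -scalerAr scalerA -exprD.
  have h1 := rank_mono RP (lex1 x1); have h2 := rank_mono RQ (lex1 x2).
  congr (_ *: 'X^_); lia.
rewrite -(pair_bigA _ (fun x1 x2 => (JP \bot%O x1 \top%O *: 'X^(rkP \top%O - rkP x1)) *
   (JQ \bot%O x2 \top%O *: 'X^(rkQ \top%O - rkQ x2)))%R) /=.
rewrite exprD -mulrA -mulrA; congr (_ * _).
rewrite mulrCA; congr (_ * _).
rewrite big_distrl /=; apply: eq_bigr => x1 _.
by rewrite big_distrr.
Qed.
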